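(* Let $G$ be a finite simple undirected connected graph, and let $c:V(G)\to \mathbb{R}_{>0}$ and $\kappa:V(G)\to \mathbb{Z}$ be functions such that $0\leq \kappa(u)\leq d_G(u)$ for every vertex $u$ of $G$. Then $$\beta(G,c,\kappa) = \sum_{u\in V(G)} \frac{c(u)\big(d_G(u)-\kappa(u)\big)\big(d_G(u)-\kappa(u)+1\big)}{2(d_G(u)+1)}$$ holds if and only if one of the following holds: (i) $\kappa(u)=d_G(u)$ for every vertex $u$ of $G$; (ii) $c$ is constant on $V(G)$ and $\kappa(u)=0$ for every vertex $u$ of $G$; (iii) $G$ is a clique (complete graph), $c$ and $\kappa$ are constant on $V(G)$, and $0<\kappa(u)<d_G(u)$ for every vertex $u$ of $G$.
   Context: $d_G(u)$ denotes the degree of $u$ in $G$, and $[n]=\{1,\dots,n\}$. For a function $\lambda:V(G)\to\mathbb{Z}$, a set $I\subseteq V(G)$ is called $\lambda$-degenerate in $G$ if there is a linear ordering $u_1,\ldots,u_k$ of the vertices of $I$ such that for every $i\in[k]$, $u_i$ has at most $\lambda(u_i)$ neighbors in $\{u_j: j\in[i-1]\}$. Define $$\beta(G,c,\kappa)=\min\Big\{\sum_{u\in V(G)} c(u)\iota(u) : \iota:V(G)\to\mathbb{Z}_{\geq 0} \text{ and } V(G) \text{ is } (\kappa+\iota)\text{-degenerate in } G\Big\}.$$ (It is known that always $\beta(G,c,\kappa)$ is at most the right-hand side sum in the claim.) *)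

(* Defs.v *)
From HB Require Import structures.
From mathcomp Require Import all_boot all_order all_algebra.
Set Implicit Arguments. Unset Strict Implicit. Unset Printing Implicit Defensive.
Import Order.TTheory GRing.Theory Num.Theory.
Local Open Scope ring_scope.

Definition simple_graph (T : finType) (e : rel T) : Prop :=
  symmetric e /\ irreflexive e.

Definition connected_graph (T : finType) (e : rel T) : Prop :=
  forall x y : T, connect e x y.

Definition deg (T : finType) (e : rel T) (u : T) : nat := #|[set v | e u v]|.

Definition degenerate (T : finType) (e : rel T) (lam : T -> int) (I : {set T}) : Prop :=
  exists s : seq T,
    [/\ uniq s, (forall x, (x \in s) = (x \in I)) &
        forall (s1 s2 : seq T) (u : T), s = s1 ++ u :: s2 ->
          (#|[set v in s1 | e u v]|)%:Z <= lam u].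

Definition admissible (T : finType) (e : rel T) (kappa : T -> int) (iota : T -> nat) : Prop :=
  degenerate e (fun u => kappa u + (iota u)%:Z) [set: T].

Definition cost (R : numDomainType) (T : finType) (c : T -> R) (iota : T -> nat) : R :=
  \sum_(u : T) c u * (iota u)%:R.

Definition is_beta (R : realDomainType) (T : finType) (e : rel T) (c : T -> R)
    (kappa : T -> int) (b : R) : Prop :=
  (exists iota, admissible e kappa iota /\ cost c iota = b) /\
  (forall iota, admissible e kappa iota -> b <= cost c iota).

(* Main.v *)
Require Import Defs.
From HB Require Import structures.
From mathcomp Require Import all_boot all_order all_algebra.
From mathcomp Require Import all_fingroup.
From mathcomp Require Import ring lra zify.
From Stdlib Require Import FunctionalExtensionality.
Import Order.TTheory GRing.Theory Num.Theory.

Module P1.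
Set Implicit Arguments. Unset Strict Implicit. Unset Printing Implicit Defensive.
Import Order.TTheory GRing.Theory Num.Theory.

Section Gen.
Variable T : finType.

Definition rk (pos : T -> nat) (A : {set T}) x := #|[set v in A | pos v < pos x]|.

Lemma rk_lt pos (A : {set T}) x : x \in A -> rk pos A x < #|A|.
Proof.
move=> xA; apply: proper_card; apply/properP; split.
  by apply/subsetP => v; rewrite inE => /andP[].
by exists x => //; rewrite inE ltnn andbF.
Qed.

Lemma rk_mono pos (A : {set T}) x y : x \in A -> pos x < pos y -> rk pos A x < rk pos A y.
Proof.
move=> xA lxy; apply: proper_card; apply/properP; split.
  apply/subsetP => v; rewrite !inE => /andP[-> /= h]; exact: ltn_trans h lxy.
by exists x; rewrite !inE ?xA ?lxy // ltnn andbF.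
Qed.

Lemma rk_inj pos (A : {set T}) : injective pos -> {in A &, injective (rk pos A)}.
Proof.
move=> ip x y xA yA E; case: (ltngtP (pos x) (pos y)) => H.
- by have := rk_mono xA H; rewrite E ltnn.
- by have := rk_mono yA H; rewrite E ltnn.
- exact: ip.
Qed.

Lemma rk_sum (V : nmodType) pos (A : {set T}) (h : nat -> V) : injective pos ->
  (\sum_(w in A) h (rk pos A w) = \sum_(j < #|A|) h j)%R.
Proof.
move=> ip; rewrite -big_enum -(big_map (rk pos A) xpredT h) -(big_mkord xpredT h).
apply: perm_big; rewrite /index_iota subn0.
have U : uniq [seq rk pos A i | i <- enum A].
  rewrite map_inj_in_uniq ?enum_uniq // => x y; rewrite !mem_enum; exact: rk_inj.
apply: uniq_perm => //; first exact: iota_uniq.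
have [|| _ E] := uniq_min_size U (s2 := iota 0 #|A|); last exact: E.
- move=> j /mapP [x]; rewrite mem_enum => xA ->; rewrite mem_iota add0n rk_lt // andbT.
- by rewrite size_map size_iota -cardE.

Qed.

Definition ip (x : T) := index x (enum T).

Lemma ip_lt x : ip x < #|T|.
Proof. by rewrite cardT index_mem mem_enum. Qed.

Lemma ip_inj : injective ip.
Proof.
move=> x y E; rewrite -(nth_index x (mem_enum T x)) -(nth_index x (mem_enum T y)).
by rewrite /ip in E; rewrite E.
Qed.

Definition posp (p : {perm T}) x := ip (p x).

Lemma posp_inj p : injective (posp p).
Proof. move=> x y /ip_inj; exact: perm_inj. Qed.

Lemma order_perm pos : injective pos ->
  exists p : {perm T}, forall x y, (posp p x < posp p y) = (pos x < pos y).
Proof.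
move=> ipos.
pose f x := nth x (enum T) (rk pos setT x).
have rlt x : rk pos setT x < size (enum T) by rewrite -cardT -cardsT rk_lt ?inE.
have finj : injective f.
  move=> x y; rewrite /f (set_nth_default x y) // => /eqP.
  rewrite nth_uniq ?enum_uniq // => /eqP E.
  exact: (rk_inj ipos) E; rewrite inE.
exists (perm finj) => x y; rewrite /posp !permE /ip /f !index_uniq ?enum_uniq //.
case: (ltngtP (pos x) (pos y)) => H.
- by rewrite rk_mono ?inE.
- by apply/negbTE; rewrite -leqNgt ltnW // rk_mono ?inE.
- by rewrite (ipos _ _ H) ltnn.
Qed.

Lemma seq_pos (s1 s2 : seq T) u v : uniq (s1 ++ u :: s2) ->
  (v \in s1) = (index v (s1 ++ u :: s2) < index u (s1 ++ u :: s2)).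
Proof.
rewrite cat_uniq /= => /and3P [_ /norP [us1 _] _].
rewrite !index_cat (negbTE us1) /= eqxx addn0.
case: ifP => vs1; first by rewrite index_mem vs1.
by rewrite ltnNge leq_addr.
Qed.

End Gen.

End P1.
Import P1.

Module P2.
Set Implicit Arguments. Unset Strict Implicit. Unset Printing Implicit Defensive.
Import Order.TTheory GRing.Theory Num.Theory.

Section Main.
Variables (R : realFieldType) (T : finType) (e : rel T) (c : T -> R) (k : T -> nat).
Hypotheses (esym : symmetric e) (eirr : irreflexive e) (cpos : forall u, (0 < c u)%R).

Definition nb u := [set v | e u v].
Definition dg u := #|nb u|.
Definition bk (pos : T -> nat) u := #|[set v in nb u | pos v < pos u]|.
Definition F pos : R := (\sum_u c u * (bk pos u - k u)%:R)%R.
Definition RH : R := (\sum_u c u * (((dg u - k u) * (dg u - k u).+1)%:R / (2 * (dg u).+1%:R)))%R.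

Lemma bk_le pos u : bk pos u <= dg u.
Proof. by apply: subset_leq_card; apply/subsetP => v; rewrite inE => /andP[]. Qed.

Lemma bk_order pos pos' : (forall x y, (pos x < pos y) = (pos' x < pos' y)) ->
  bk pos =1 bk pos'.
Proof. by move=> H u; rewrite /bk; apply: eq_card => v; rewrite !inE H. Qed.

Lemma F_order pos pos' : (forall x y, (pos x < pos y) = (pos' x < pos' y)) ->
  F pos = F pos'.
Proof. by move=> H; apply: eq_bigr => u _; rewrite (bk_order H). Qed.

Lemma F_inj pos : injective pos -> exists p, F pos = F (posp p).
Proof.
by move=> /order_perm [p Hp]; exists p; apply: F_order => x y; rewrite Hp.
Qed.

Lemma bk_rk pos u : bk pos u = rk pos (u |: nb u) u.
Proof.
rewrite /bk /rk; apply: eq_card => v; rewrite !inE.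
by case: (v =P u) => [->|]; rewrite ?ltnn ?andbF.
Qed.

Lemma tp_mem (A : {set T}) u w v : u \in A -> w \in A ->
  (tperm u w v \in A) = (v \in A).
Proof. by move=> uA wA; case: tpermP => [->|->|] //; rewrite ?uA ?wA. Qed.

Lemma rk_swap p (A : {set T}) u w : u \in A -> w \in A ->
  rk (posp (tperm u w * p)%g) A u = rk (posp p) A w.
Proof.
move=> uA wA; rewrite /rk.
rewrite -(card_preimset [set v in A | posp p v < posp p w] (@perm_inj _ (tperm u w))).
by apply: eq_card => v; rewrite !inE tp_mem // /posp !permM tpermL.
Qed.

Lemma cardN1 u : #|u |: nb u| = (dg u).+1.
Proof. by rewrite cardsU1 inE eirr. Qed.

Lemma avg_nat (h : nat -> nat) u :
  (dg u).+1 * (\sum_(p : {perm T}) h (bk (posp p) u)) =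
  #|{perm T}| * \sum_(j < (dg u).+1) h j.
Proof.
set A := u |: nb u.
have uA : u \in A by rewrite !inE eqxx.
have E w : w \in A -> \sum_(p : {perm T}) h (bk (posp p) u) =
                     \sum_(p : {perm T}) h (rk (posp p) A w).
  move=> wA; rewrite (reindex_inj (@mulgI _ (tperm u w))) /=.
  by apply: eq_bigr => p _; rewrite bk_rk rk_swap.
rewrite -cardN1 -sum_nat_const (eq_bigr _ E) exchange_big /=.
rewrite (eq_bigr (fun=> \sum_(j < #|A|) h j)); last first.
  by move=> p _; rewrite (rk_sum _ _ (@posp_inj _ p)).
by rewrite sum_nat_const cardE.
Qed.
Lemma tri k0 m : 2 * \sum_(j < m.+1) (j - k0) = (m - k0) * (m - k0).+1.
Proof.
elim: m => [|m IH]; first by rewrite big_ord_recr big_ord0 /= sub0n.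
rewrite big_ord_recr /= mulnDr IH; case: (leqP k0 m) => H.
  rewrite (subSn H); set x := m - k0; ring.
have H1 : m - k0 = 0 by lia.
have H2 : m.+1 - k0 = 0 by lia.
by rewrite H1 H2.
Qed.

Lemma avg : (\sum_(p : {perm T}) F (posp p) = #|{perm T}|%:R * RH)%R.
Proof.
rewrite /F /RH exchange_big /= mulr_sumr; apply: eq_bigr => u _.
rewrite -mulr_sumr -natr_sum.
set S := (\sum_p _)%N; set D := (dg u).+1; set N := #|{perm T}|.
set Y := \sum_(j < D) (j - k u).
have e1 : (D%:R * S%:R = N%:R * Y%:R :> R)%R by rewrite -!natrM /D /S /Y (avg_nat (fun j => j - k u)).
have e2 : (2 * Y%:R = ((dg u - k u) * (dg u - k u).+1)%:R :> R)%R.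
  by rewrite -tri natrM.
have D0 : (D%:R != 0 :> R)%R by rewrite pnatr_eq0.
have -> : (S%:R = N%:R * Y%:R / D%:R :> R)%R by rewrite -e1 (mulrC D%:R%R) mulfK.
rewrite -e2; field; rewrite D0 /=; lra.
Qed.

Definition kap u : int := (k u)%:Z.

Lemma adm_perm p : admissible e kap (fun u => bk (posp p) u - k u).
Proof.
exists [seq (p^-1)%g x | x <- enum T]; split.
- by rewrite map_inj_uniq ?enum_uniq //; exact: perm_inj.
- by move=> x; rewrite inE -{1}(permK p x) mem_map ?mem_enum //; exact: perm_inj.
have idx v : index v [seq (p^-1)%g x | x <- enum T] = posp p v.
  by rewrite -{1}(permK p v) index_map //; exact: perm_inj.
move=> s1 s2 u E.
have U : uniq (s1 ++ u :: s2).
  by rewrite -E map_inj_uniq ?enum_uniq //; exact: perm_inj.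
have -> : [set v in s1 | e u v] = [set v in nb u | posp p v < posp p u].
  by apply/setP => v; rewrite !inE (seq_pos v U) -E !idx andbC.
rewrite /kap -PoszD lez_nat /bk; lia.
Qed.

Lemma adm_lower iota : admissible e kap iota ->
  exists p, (F (posp p) <= cost c iota)%R.
Proof.
case=> s [U Ms Hs].
have ms x : x \in s by rewrite Ms inE.
have pinj : injective (index^~ s) by move=> x y; apply: index_inj; rewrite ?ms.
have [p Hp] := F_inj pinj; exists p; rewrite -Hp.
apply: ler_sum => u _; apply: ler_wpM2l; first exact: ltW.
rewrite ler_nat.
have : exists s1 s2, s = s1 ++ u :: s2.
  by case/splitPr: (ms u) => s1 s2; exists s1, s2.
case=> s1 [s2 E].
have := Hs _ _ _ E.
have -> : [set v in s1 | e u v] = [set v in nb u | index v s < index u s].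
  have U' : uniq (s1 ++ u :: s2) by rewrite -E.
  by apply/setP => v; rewrite !inE E (seq_pos v U') andbC.
rewrite /kap -PoszD lez_nat /bk; lia.
Qed.

Lemma Npos : (0 < #|{perm T}|%:R :> R)%R.
Proof. by rewrite ltr0n; apply/card_gt0P; exists 1%g. Qed.

Lemma beta_iff : is_beta e c kap RH <-> (forall p, F (posp p) = RH).
Proof.
split.
  case=> _ low.
  have ge p : (RH <= F (posp p))%R by apply: low; exact: adm_perm.
  have S0 : (\sum_(p : {perm T}) (F (posp p) - RH) = 0)%R.
    by rewrite sumrB avg sumr_const mulr_natl subrr.
  move=> p; apply/eqP; rewrite -subr_eq0; apply/eqP.
  by apply: (psumr_eq0P _ S0) => // q _; rewrite subr_ge0.
move=> H; split.
  by exists (fun u => bk (posp 1%g) u - k u); split; [exact: adm_perm | exact: H].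
by move=> iota /adm_lower [p]; rewrite H.
Qed.

End Main.

End P2.
Import P2.

Module P3.
Set Implicit Arguments. Unset Strict Implicit. Unset Printing Implicit Defensive.
Import Order.TTheory GRing.Theory Num.Theory.

Section Cases.
Variables (R : realFieldType) (T : finType) (e : rel T) (c : T -> R) (k : T -> nat).
Hypotheses (esym : symmetric e) (eirr : irreflexive e) (cpos : forall u, (0 < c u)%R).

Local Notation F := (F e c k).
Local Notation RH := (RH e c k).
Local Notation bk := (bk e).
Local Notation dg := (dg e).
Local Notation nb := (nb e).

Lemma const_RH K : (forall p, F (posp p) = K) -> forall p, F (posp p) = RH.
Proof.
move=> H p; have := avg c k eirr; rewrite (eq_bigr (fun=> K)); last by move=> q _; rewrite H.
rewrite sumr_const => E; rewrite H.
apply: (@mulfI _ (#|{perm T}|%:R)%R); first by rewrite gt_eqF // (Npos R T).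
by rewrite mulr_natl; exact: E.
Qed.

Lemma case1 : (forall u, k u = dg u) -> forall p, F (posp p) = RH.
Proof.
move=> H; apply: (@const_RH 0) => p; apply: big1 => u _.
by have := bk_le e (posp p) u; rewrite -H -subn_eq0 => /eqP ->; rewrite mulr0.
Qed.

Lemma card_sum (P : pred T) : #|[set v | P v]| = \sum_v P v.
Proof.
rewrite -sum1_card big_mkcond; apply: eq_bigr => v _; rewrite inE; by case: (P v).
Qed.

Lemma dcount pos : injective pos -> 2 * \sum_u bk pos u = \sum_u dg u.
Proof.
move=> ipos.
have E1 u : bk pos u = \sum_v (e u v && (pos v < pos u)).
  by rewrite /bk -card_sum; apply: eq_card => v; rewrite !inE.
have E2 u : dg u = \sum_v (e u v && (pos v < pos u)) + \sum_v (e v u && (pos u < pos v)).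
  rewrite /P2.dg /P2.nb card_sum -big_split /=; apply: eq_bigr => v _.
  rewrite (esym v u); case: (boolP (e u v)) => //= euv.
  have nuv : u != v by apply: contraTneq euv => ->; rewrite eirr.
  have : pos u != pos v by apply: contra nuv => /eqP /ipos ->.
  by case: ltngtP.
rewrite (eq_bigr _ (fun u _ => E2 u)) big_split /= [in X in _ = _ + X]exchange_big /=.
by rewrite (eq_bigr _ (fun u _ => E1 u)) mul2n addnn.
Qed.

Lemma case2 : (forall u v, c u = c v) -> (forall u, k u = 0) ->
  forall p, F (posp p) = RH.
Proof.
move=> Hc Hk; apply: (@const_RH (F (posp 1%g))); move=> p.
case: (pickP (fun _ : T => true)) => [x _ | none]; last first.
  by rewrite /P2.F !big_pred0.
have E pos : injective pos -> F pos = (c x * (\sum_u bk pos u)%:R)%R.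
  move=> _; rewrite /P2.F natr_sum mulr_sumr; apply: eq_bigr => u _.
  by rewrite Hk subn0 (Hc u x).
rewrite (E _ (@posp_inj _ p)) (E _ (@posp_inj _ 1%g)).
have -> // : \sum_u bk (posp p) u = \sum_u bk (posp 1%g) u.
have := dcount (@posp_inj _ p); rewrite -(dcount (@posp_inj _ 1%g)); lia.
Qed.

Lemma case3 : (forall u v, u != v -> e u v) -> (forall u v, c u = c v) ->
  (forall u v, k u = k v) -> forall p, F (posp p) = RH.
Proof.
move=> He Hc Hk; apply: (@const_RH (F (posp 1%g))); move=> p.
case: (pickP (fun _ : T => true)) => [x _ | none]; last first.
  by rewrite /P2.F !big_pred0.
have E pos : injective pos ->
    F pos = (c x * \sum_(j < #|[set: T]|) (j - k x)%:R)%R.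
  move=> ipos; rewrite -(@rk_sum _ R pos [set: T] ((fun j => (j - k x)%:R)%R : nat -> R) ipos).
  rewrite mulr_sumr /P2.F; symmetry; rewrite (eq_bigl xpredT); last by move=> u; rewrite inE.
  apply: eq_bigr => u _; rewrite (Hc u x) (Hk u x); congr (_ * (_ - _)%:R)%R.
  rewrite /P2.bk /rk; apply: eq_card => v; rewrite !inE.
  case: (v =P u) => [->|/eqP nvu]; first by rewrite eirr ltnn.
  by rewrite He // eq_sym.
by rewrite (E _ (@posp_inj _ p)) (E _ (@posp_inj _ 1%g)).
Qed.


End Cases.

End P3.
Import P3.

Module P4.
Set Implicit Arguments. Unset Strict Implicit. Unset Printing Implicit Defensive.
Import Order.TTheory GRing.Theory Num.Theory.

Lemma pos_lt (T : finType) (f : T -> nat) x y :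
  (f x * #|T| + ip x < f y * #|T| + ip y) = (f x < f y) || ((f x == f y) && (ip x < ip y)).
Proof.
have hx := ip_lt x; have hy := ip_lt y.
case: (ltngtP (f x) (f y)) => H /=.
- apply/idP; apply: (@leq_trans (f x * #|T| + #|T|)); first by rewrite ltn_add2l.
  apply: leq_trans (leq_addr _ _); by rewrite addnC -mulSn leq_mul2r H orbT.
- apply/negbTE; rewrite -leqNgt; apply: (@leq_trans (f y * #|T| + #|T|)); first by rewrite ltnW // ltn_add2l.
  apply: leq_trans (leq_addr _ _); by rewrite addnC -mulSn leq_mul2r H orbT.
- by rewrite H ltn_add2l.
Qed.

Lemma pos_inj (T : finType) (f : T -> nat) : injective (fun x => f x * #|T| + ip x).
Proof.
move=> x y E; apply: ip_inj.
have := congr1 (modn^~ #|T|) E; rewrite /= !modnMDl !modn_small //; exact: ip_lt.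
Qed.

Section Swap.
Variables (R : realFieldType) (T : finType) (e : rel T) (c : T -> R) (k : T -> nat).
Hypotheses (esym : symmetric e) (eirr : irreflexive e) (cpos : forall u, (0 < c u)%R).

Local Notation F := (F e c k).
Local Notation RH := (RH e c k).
Local Notation bk := (bk e).
Local Notation dg := (dg e).
Local Notation nb := (nb e).

Definition cls (S : {set T}) u v x :=
  if x \in S then 0 else if x == u then 1 else if x == v then 2 else 3.

Lemma natS (n m : nat) : ((n.+1 - m)%:R = (n - m)%:R + (m <= n)%:R :> R)%R.
Proof.
case: (leqP m n) => H; first by rewrite subSn // -addn1 natrD.
have -> : n.+1 - m = 0 by lia.
have -> : n - m = 0 by lia.
by rewrite addr0.
Qed.

Lemma sum2 (G : T -> R) u v : u != v ->
  (\sum_x G x = G u + (G v + \sum_(x | (x != u) && (x != v)) G x))%R.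
Proof.
move=> uv; rewrite (bigD1 u) //= (bigD1 v) 1?eq_sym //=.
Qed.

Hypothesis Hconst : forall p, F (posp p) = RH.

Lemma swap u v (S : {set T}) : e u v -> u \notin S -> v \notin S ->
  (c u * (k u <= #|nb u :&: S|)%:R = c v * (k v <= #|nb v :&: S|)%:R)%R.
Proof.
move=> euv uS vS.
have uv : u != v by apply: contraTneq euv => ->; rewrite eirr.
pose P1 x := cls S u v x * #|T| + ip x.
pose P2 x := cls S v u x * #|T| + ip x.
have EF : F P1 = F P2.
  have [p1 ->] := F_inj e c k (@pos_inj T (cls S u v)).
  have [p2 ->] := F_inj e c k (@pos_inj T (cls S v u)).
  by rewrite !Hconst.
have B1u : bk P1 u = #|nb u :&: S|.
  apply: eq_card => y; rewrite !inE pos_lt /cls (negbTE uS) eqxx.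
  case: (y \in S); rewrite ?andbT //=.
  case: (y =P u) => [->|_]; rewrite ?eirr //=.
  by case: (y == v); rewrite andbF.
have B2u : bk P2 u = #|nb u :&: S|.+1.
  have E := cardsU1 v (nb u :&: S); rewrite inE (negbTE vS) andbF /= add1n in E.
  rewrite -E.
  apply: eq_card => y; rewrite !inE pos_lt /cls (negbTE uS) eqxx (negbTE uv).
  case: (y =P v) => [->|_]; first by rewrite (negbTE vS) euv.
  case: (y \in S); rewrite ?andbT //=.
  case: (y =P u) => [->|_]; rewrite ?eirr //=.
have B2v : bk P2 v = #|nb v :&: S|.
  apply: eq_card => y; rewrite !inE pos_lt /cls (negbTE vS) eqxx.
  case: (y \in S); rewrite ?andbT //=.
  case: (y =P v) => [->|_]; rewrite ?eirr //=.
  by case: (y == u); rewrite andbF.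
have B1v : bk P1 v = #|nb v :&: S|.+1.
  have E := cardsU1 u (nb v :&: S); rewrite inE (negbTE uS) andbF /= add1n in E.
  rewrite -E.
  apply: eq_card => y; rewrite !inE pos_lt /cls (negbTE vS) (eq_sym v u) (negbTE uv) eqxx.
  case: (y =P u) => [->|_]; first by rewrite (negbTE uS) esym euv.
  case: (y \in S); rewrite ?andbT //=.
  case: (y =P v) => [->|_]; rewrite ?eirr //=.
have Bx x : x != u -> x != v -> bk P1 x = bk P2 x.
  move=> xu xv; apply: eq_card => y; rewrite !inE !pos_lt /cls (negbTE xu) (negbTE xv).
  case: (x \in S); case: (y \in S) => //=; case: (y == u); case: (y == v) => //=.
move: EF; rewrite /P2.F (sum2 _ uv) [in X in _ = X -> _](sum2 _ uv).
rewrite B1u B2u B1v B2v (eq_bigr (fun x => c x * (bk P2 x - k x)%:R)%R); last first.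
  by move=> x /andP [xu xv]; rewrite Bx.
rewrite !natS; set X := (\sum_(_ | _) _)%R => E.
move: E; set a := ((_ - k u)%:R)%R; set b := ((_ - k v)%:R)%R.
set A := ((k u <= _)%:R)%R; set B := ((k v <= _)%:R)%R => E.
have : (c v * B - c u * A = 0)%R.
  by move/eqP: E; rewrite -subr_eq0 => /eqP <-; ring.
by move/eqP; rewrite subr_eq0 => /eqP.
Qed.
End Swap.

End P4.
Import P4.

Module P5.
Set Implicit Arguments. Unset Strict Implicit. Unset Printing Implicit Defensive.
Import Order.TTheory GRing.Theory Num.Theory.

Lemma ex_sub (T : finType) (A : {set T}) m : m <= #|A| -> exists2 S : {set T}, S \subset A & #|S| = m.
Proof.
elim: m => [|m IH] H; first by exists set0; rewrite ?sub0set ?cards0.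
have [S sSA cS] := IH (ltnW H).
have : ~~ (A \subset S).
  apply/negP => /subset_leq_card; rewrite cS; lia.
case/subsetPn => x xA xS; exists (x |: S).
  by rewrite subUset sub1set xA.
by rewrite cardsU1 xS cS.
Qed.

Lemma ex_sub_w (T : finType) (A : {set T}) w m : w \in A -> 0 < m -> m <= #|A| ->
  exists S : {set T}, [/\ S \subset A, w \in S & #|S| = m].
Proof.
move=> wA m0 mA.
have cA := cardsD1 w A; rewrite wA in cA.
have [S sS cS] := @ex_sub _ (A :\ w) m.-1 ltac:(lia).
exists (w |: S); split.
- rewrite subUset sub1set wA (subset_trans sS) //; exact: subsetDl.
- by rewrite !inE eqxx.
- have wS : w \notin S by apply/negP => /(subsetP sS); rewrite !inE eqxx.
  rewrite cardsU1 wS cS; lia.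
Qed.

Section Comb.
Variables (R : realFieldType) (T : finType) (e : rel T) (c : T -> R) (k : T -> nat).
Hypotheses (esym : symmetric e) (eirr : irreflexive e) (cpos : forall u, (0 < c u)%R).
Local Notation dg := (dg e).
Local Notation nb := (nb e).

Hypothesis Sw : forall u v (S : {set T}), e u v -> u \notin S -> v \notin S ->
  (c u * (k u <= #|nb u :&: S|)%:R = c v * (k v <= #|nb v :&: S|)%:R)%R.

Lemma swb u v (S : {set T}) : e u v -> u \notin S -> v \notin S ->
  ((k u <= #|nb u :&: S|) = (k v <= #|nb v :&: S|)) /\
  ((k u <= #|nb u :&: S|) -> c u = c v).
Proof.
move=> euv uS vS; have := Sw euv uS vS.
case: (k u <= _); case: (k v <= _); rewrite ?mulr1 ?mulr0 => H.
- by split => // _.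
- by have := cpos u; rewrite H ltxx.
- by have := cpos v; rewrite -H ltxx.
- by split.
Qed.

Lemma prop1 u v : e u v -> k u = 0 -> k v = 0 /\ c u = c v.
Proof.
move=> euv ku; have [E1 E2] := swb (S := set0) euv (negbT (in_set0 u)) (negbT (in_set0 v)).
rewrite !setI0 !cards0 ku /= in E1 E2; split; last exact: E2.
by apply/eqP; rewrite -leqn0 -E1.
Qed.

Lemma cardS u v : e u v -> dg u = #|nb u :&: ~: [set u; v]|.+1.
Proof.
move=> euv; have E := cardsU1 v (nb u :&: ~: [set u; v]).
rewrite !inE eqxx orbT andbF /= add1n in E; rewrite -E.
apply: eq_card => y; rewrite !inE.
case: (y =P v) => [->|_]; first by rewrite euv.
by case: (y =P u) => [->|_]; rewrite ?eirr ?andbF ?andbT.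
Qed.

Lemma prop2 u v : e u v -> k u < dg u -> k v < dg v /\ c u = c v.
Proof.
move=> euv ku.
have uS : u \notin ~: [set u; v] by rewrite !inE eqxx.
have vS : v \notin ~: [set u; v] by rewrite !inE eqxx orbT.
have [E1 E2] := swb euv uS vS.
have Hu := cardS euv.
have Hv : dg v = #|nb v :&: ~: [set u; v]|.+1.
  by rewrite (cardS (_ : e v u)) 1?setUC // esym.
have ku' : k u <= #|nb u :&: ~: [set u; v]| by rewrite -ltnS -Hu.
split; last exact: E2.
by rewrite Hv ltnS -E1.
Qed.

Lemma half u v : e u v -> 0 < k u -> k u < dg u -> k v <= k u /\
  (k u <= k v -> forall w, w != u -> w != v -> e u w -> e v w).
Proof.
move=> euv k0 ku.
have Hu := cardS euv.
set S0 := ~: [set u; v] in Hu *.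
have sub (S : {set T}) : S \subset nb u :&: S0 -> u \notin S /\ v \notin S.
  move=> /subsetP sS; split; apply/negP => /sS; rewrite !inE eqxx ?orbT; by rewrite andbF.
have nbS (S : {set T}) : S \subset nb u :&: S0 -> nb u :&: S = S.
  by move=> sS; apply/setIidPr; apply: subset_trans sS (subsetIl _ _).
have kA0 : k u <= #|nb u :&: S0| by rewrite -ltnS -Hu.
have [S sS cS] := @ex_sub _ (nb u :&: S0) (k u) kA0.
have [uS vS] := sub S sS.
have [E1 _] := swb euv uS vS.
have kv : k v <= k u.
  rewrite -cS; apply: leq_trans (subset_leq_card (subsetIr (nb v) S)).
  by rewrite -E1 nbS // cS.
split => // kuv w wu wv euw; apply/contraT => nevw.
have wA : w \in nb u :&: S0 by rewrite !inE euw negb_or wu wv.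
have [S' [sS' wS' cS']] := ex_sub_w wA k0 kA0.
have [uS' vS'] := sub S' sS'.
have [E1' _] := swb euv uS' vS'.
have : k v <= #|nb v :&: S'| by rewrite -E1' nbS // cS'.
have : #|nb v :&: S'| <= #|S' :\ w|.
  apply: subset_leq_card; apply/subsetP => y; rewrite !inE => /andP [evy yS].
  rewrite yS andbT; apply/eqP => yw; rewrite yw in evy; by rewrite evy in nevw.
have := cardsD1 w S'; rewrite wS' cS' => h3 h2 h1.
clear -h1 h2 h3 kuv; lia.
Qed.

Lemma Mnb x y : e x y -> (forall w, w != x -> w != y -> e x w = e y w) ->
  x |: nb x = y |: nb y.
Proof.
move=> exy H; apply/setP => z; rewrite !inE.
case: (z =P x) => [->|/eqP zx]; first by rewrite esym exy orbT.
case: (z =P y) => [->|/eqP zy]; first by rewrite exy.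
by rewrite /= H.
Qed.

Lemma final : (forall u, k u <= dg u) -> (forall x y, connect e x y) ->
  [\/ (forall u, k u = dg u), (forall u v, c u = c v) /\ (forall u, k u = 0)
   | [/\ (forall u v, u != v -> e u v), (forall u v, c u = c v),
         (forall u v, k u = k v) & (forall u, 0 < k u < dg u)]].
Proof.
move=> kd conn.
case: (boolP [forall u, k u == dg u]) => [/forallP H | /forallPn [u0 Hu0]].
  by constructor 1 => u; apply/eqP.
have ku0 : k u0 < dg u0 by rewrite ltn_neqAle Hu0 kd.
case: (boolP [exists u, k u == 0]) => [/existsP [u1 /eqP k1] | /existsPn H0].
  pose a := [pred x | (k x == 0) && (c x == c u1)].
  have cl : closed e a.
    move=> x y exy; rewrite !inE; apply/idP/idP => /andP [/eqP kx /eqP cx].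
      by have [-> <-] := prop1 exy kx; rewrite cx !eqxx.
    have eyx : e y x by rewrite esym.
    by have [-> <-] := prop1 eyx kx; rewrite cx !eqxx.
  have inA x : x \in a.
    by rewrite -(closed_connect cl (conn u1 x)) !inE k1 !eqxx.
  constructor 2; split.
    move=> u v; have := inA u; have := inA v; rewrite !inE.
    by move=> /andP [_ /eqP ->] /andP [_ /eqP ->].
  by move=> u; have := inA u; rewrite !inE => /andP [/eqP].
have kpos x : 0 < k x by rewrite lt0n; exact: H0.
pose a := [pred x | (k x < dg x) && (c x == c u0)].
have cl : closed e a.
  move=> x y exy; rewrite !inE; apply/idP/idP => /andP [kx /eqP cx].
    by have [-> <-] := prop2 exy kx; rewrite cx !eqxx.
  have eyx : e y x by rewrite esym.
  by have [-> <-] := prop2 eyx kx; rewrite cx !eqxx.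
have inA x : x \in a.
  by rewrite -(closed_connect cl (conn u0 x)) !inE ku0 !eqxx.
have kdx x : k x < dg x by have := inA x; rewrite inE => /andP [].
have cx x : c x = c u0 by have := inA x; rewrite inE => /andP [_ /eqP].
have edge x y : e x y -> k x = k y /\ x |: nb x = y |: nb y.
  move=> exy; have eyx : e y x by rewrite esym.
  have [h1 h2] := half exy (kpos x) (kdx x).
  have [h3 h4] := half eyx (kpos y) (kdx y).
  have kxy : k x = k y by apply/eqP; rewrite eqn_leq h1 h3.
  split => //; apply: Mnb => // w wx wy; apply/idP/idP.
    by apply: h2 => //; rewrite kxy.
  by apply: h4 => //; rewrite kxy.
pose b := [pred x | (k x == k u0) && (x |: nb x == u0 |: nb u0)].
have clb : closed e b.
  move=> x y exy; rewrite !inE; by have [-> ->] := edge x y exy.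
have inB x : x \in b.
  by rewrite -(closed_connect clb (conn u0 x)) !inE !eqxx.
have kx x : k x = k u0 by have := inB x; rewrite inE => /andP [/eqP].
have Mx x : x |: nb x = u0 |: nb u0 by have := inB x; rewrite inE => /andP [_ /eqP].
constructor 3; split.
- move=> u v uv; have : v \in v |: nb v by rewrite !inE eqxx.
  by rewrite Mx -(Mx u) !inE eq_sym (negbTE uv).
- by move=> u v; rewrite !cx.
- by move=> u v; rewrite !kx.
- by move=> u; rewrite kpos kdx.
Qed.
End Comb.

End P5.
Import P5.

Unset Implicit Arguments. Set Strict Implicit. Set Printing Implicit Defensive.
Local Open Scope ring_scope.

Theorem theorem3 (R : realFieldType) (T : finType) (e : rel T)
  (c : T -> R) (kappa : T -> int) :
  simple_graph e -> connected_graph e ->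
  (forall u, 0 < c u) ->
  (forall u, 0 <= kappa u <= (deg e u)%:Z) ->
  is_beta e c kappa
    (\sum_(u : T) c u * ((((deg e u)%:Z - kappa u) * ((deg e u)%:Z - kappa u + 1))%:~R
                          / (2 * ((deg e u).+1)%:R)))
  <->
  [\/ (forall u, kappa u = (deg e u)%:Z),
      (forall u v, c u = c v) /\ (forall u, kappa u = 0)
    | [/\ (forall u v, u != v -> e u v),
          (forall u v, c u = c v), (forall u v, kappa u = kappa v) &
          (forall u, 0 < kappa u < (deg e u)%:Z)]].
Proof.
move=> [esym eirr] conn cpos hk.
pose k u := `|kappa u|%N.
have kE u : kappa u = (k u)%:Z by rewrite /k gez0_abs //; case/andP: (hk u).
have kd u : (k u <= dg e u)%N by have := hk u; rewrite kE lez_nat => /andP[].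
have -> : kappa = kap k by apply: functional_extensionality => u; rewrite kE.
have -> : \sum_(u : T) c u * ((((deg e u)%:Z - kap k u) * ((deg e u)%:Z - kap k u + 1))%:~R
                          / (2 * ((deg e u).+1)%:R)) = RH e c k.
  apply: eq_bigr => u _; rewrite /kap subzn ?kd // -PoszD addn1 -PoszM.
  by [].
rewrite (beta_iff k eirr cpos); split.
  move=> H; have Sw := swap esym eirr H.
  case: (final esym eirr cpos Sw kd conn) => [H1 | [H1 H2] | [H1 H2 H3 H4]].
  - by constructor 1 => u; rewrite /kap H1.
  - by constructor 2; split => // u; rewrite /kap H2.
  - by constructor 3; split => // u v; rewrite /kap (H3 u v).
case=> [H1 | [H1 H2] | [H1 H2 H3 H4]].
- apply: case1 => // u; apply/eqP; rewrite -eqz_nat; apply/eqP; exact: H1.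
- apply: case2 => // u; apply/eqP; rewrite -eqz_nat; apply/eqP; exact: H2.
- apply: case3 => // u v.
  by apply/eqP; rewrite -eqz_nat; apply/eqP; exact: H3.
Qed.
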